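(* Let $G\leq\operatorname{Homeo}(\mathfrak{C})$ be a vigorous group generated by its elements of small support. Suppose $B,C,D\in K_{\mathfrak{C}}$ are pairwise disjoint and $B\cup C\cup D=\mathfrak{C}$. Then $G=\langle \operatorname{pstab}_G(C)\cup\operatorname{pstab}_G(D)\rangle$.
   Context: $\mathfrak{C}$ denotes a Cantor space (a space homeomorphic to $\{0,1\}^\omega$). Groups of homeomorphisms act on the right. $K_{\mathfrak{C}}$ denotes the set of non-empty proper clopen subsets of $\mathfrak{C}$. For $\gamma\in\operatorname{Homeo}(\mathfrak{C})$, $\operatorname{supp}(\gamma)=\{p\in\mathfrak{C}: p\gamma\neq p\}$. For $G\le\operatorname{Homeo}(\mathfrak{C})$ and $A\subseteq\mathfrak{C}$, $\operatorname{pstab}_G(A)=\{g\in G: pg=p \text{ for all } p\in A\}$. A subset $S\subseteq \operatorname{Homeo}(\mathfrak{C})$ is vigorous if for all clopen $A,B,C\subseteq\mathfrak{C}$ with $B,C$ non-empty proper subsets of $A$ there is $\gamma\in S$ with $\operatorname{supp}(\gamma)\subseteq A$ and $B\gamma\subseteq C$. $G$ is generated by its elements of small support if $G$ is generated by $\{\gamma\in G: \operatorname{supp}(\gamma)\subseteq A \text{ for some } A\in K_{\mathfrak{C}}\}$. *)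

(* Defs.v *)
From HB Require Import structures.
From mathcomp Require Import all_boot all_order all_algebra.
From mathcomp Require Import all_classical all_reals topology cantor.
Set Implicit Arguments. Unset Strict Implicit. Unset Printing Implicit Defensive.
Local Open Scope classical_set_scope.

(* The Cantor space C is modelled by MathComp-Analysis' [cantor_space]
   (bool^nat with the product topology). Points act on the right: p g = g p. *)
Notation CS := cantor_space.

Definition clopen_set (A : set CS) : Prop := open A /\ closed A.

Definition K_C (A : set CS) : Prop := clopen_set A /\ A !=set0 /\ A <> setT.

Definition is_homeo (f : CS -> CS) : Prop :=
  continuous f /\ exists g : CS -> CS,
    continuous g /\ cancel f g /\ cancel g f.

Definition supp (g : CS -> CS) : set CS := [set p | g p <> p].

Definition is_subgroup (H : set (CS -> CS)) : Prop :=
  [/\ (forall f, H f -> is_homeo f),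
      H id,
      (forall f g, H f -> H g -> H (g \o f)) &
      (forall f, H f -> exists2 g, H g & cancel f g /\ cancel g f)].

Definition generated (S : set (CS -> CS)) : set (CS -> CS) :=
  [set f | forall H, is_subgroup H -> S `<=` H -> H f].

Definition pstab (G : set (CS -> CS)) (A : set CS) : set (CS -> CS) :=
  [set g | G g /\ forall p, A p -> g p = p].

Definition vigorous (S : set (CS -> CS)) : Prop :=
  forall A B C : set CS, clopen_set A -> clopen_set B -> clopen_set C ->
    B !=set0 -> B `<=` A -> B <> A ->
    C !=set0 -> C `<=` A -> C <> A ->
    exists2 g, S g & supp g `<=` A /\ g @` B `<=` C.

Definition gen_small_support (G : set (CS -> CS)) : Prop :=
  G = generated [set g | G g /\ exists A, K_C A /\ supp g `<=` A].

(* Main.v *)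
Require Import Defs.
From mathcomp Require Import all_boot all_order all_algebra.
From mathcomp Require Import all_classical all_reals topology cantor.
Local Open Scope classical_set_scope.

Lemma cU (X Y : set cantor_space) : clopen_set X -> clopen_set Y -> clopen_set (X `|` Y).
Proof. by move=> [? ?] [? ?]; split; [apply: openU | apply: closedU]. Qed.

Lemma cI (X Y : set cantor_space) : clopen_set X -> clopen_set Y -> clopen_set (X `&` Y).
Proof. by move=> [? ?] [? ?]; split; [apply: openI | apply: closedI]. Qed.

Lemma cC (X : set cantor_space) : clopen_set X -> clopen_set (~` X).
Proof. by move=> [? ?]; split; [apply: closed_openC | apply: open_closedC]. Qed.

Lemma neqU (X Y Z : set cantor_space) : Z `<=` X -> Y !=set0 -> X `&` Y = set0 ->
  Z <> X `|` Y.
Proof.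
move=> ZX [y Yy] XY E.
have : (X `|` Y) y by right.
rewrite -E => /ZX Xy.
have : (X `&` Y) y by [].
by rewrite XY.
Qed.

Lemma in_pstab (G : set (cantor_space -> cantor_space)) (X Y : set cantor_space) f :
  G f -> supp f `<=` X -> X `&` Y = set0 -> pstab G Y f.
Proof.
move=> Gf sX XY; split => // p Yp.
apply: contrapT => fp.
have : (X `&` Y) p by split => //; apply: sX.
by rewrite XY.
Qed.

Lemma inv_uniq (k g1 g2 : cantor_space -> cantor_space) :
  cancel k g1 -> cancel g1 k -> cancel k g2 -> g1 = g2.
Proof.
move=> a b c; apply: funext => x.
by rewrite -{2}(b x) c.
Qed.

Ltac fin := solve [ done | exact: cU | (apply: cI; [apply: cC|]; assumption) | by move=> ? ?; left | by move=> ? ?; right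
  | by move=> ? [_ ?]; left | by move=> ? [_ ?]; right | by apply: neqU
  | by rewrite setUC; apply: neqU => //; rewrite setIC | by apply: neqU => // ? []
  | by rewrite setUC; apply: neqU => //; [move=> ? [] | rewrite setIC]
  | by eexists; split; eassumption ].

Lemma core (G K : set (cantor_space -> cantor_space)) (B C D A : set cantor_space) g :
  is_subgroup G -> vigorous G -> is_subgroup K ->
  pstab G C `|` pstab G D `<=` K ->
  K_C B -> K_C C -> K_C D ->
  B `&` C = set0 -> B `&` D = set0 -> C `&` D = set0 ->
  B `|` C `|` D = setT ->
  G g -> K_C A -> supp g `<=` A -> K g.
Proof.
move=> [Gh Gid GM GV] vG [Kh Kid KM KV] PK [cB [nB _]] [cC [nC _]] [cD [nD _]]
  BC BD CD U Gg [cA [_ nA]] sA.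
have CB : C `&` B = set0 by rewrite setIC.
have DB : D `&` B = set0 by rewrite setIC.
have DC : D `&` C = set0 by rewrite setIC.
have BCD : (B `|` C) `&` D = set0 by rewrite setIUl BD CD setU0.
have BDC : (B `|` D) `&` C = set0 by rewrite setIUl BC DC setU0.
have [k1 Gk1 [sk1 k1C]] : exists2 k, G k & supp k `<=` B `|` C /\ k @` C `<=` B.
  apply: vG; fin.
have Kk1 : K k1 by apply: (PK); right; apply: in_pstab Gk1 sk1 BCD.
have [k2 Kk2 [Gk2 k2B]] : exists2 k, K k & G k /\ k @` B `<=` ~` A.
  have [p nAp] : exists p, ~ A p.
    by apply: contrapT => h; apply: nA; apply/seteqP; split => // x _;
       apply: contrapT => Ax; apply: h; exists x.
  have : (B `|` C `|` D) p by rewrite U.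
  case=> [[Bp|Cp]|Dp].
  - have [k Gk [sk kB]] : exists2 k, G k & supp k `<=` B `|` C /\ k @` B `<=` ~` A `&` B.
  apply: vG; fin.
    exists k; first by apply: (PK); right; apply: in_pstab Gk sk BCD.
    by split => // y /kB [].
  - have [k Gk [sk kB]] : exists2 k, G k & supp k `<=` B `|` C /\ k @` B `<=` ~` A `&` C.
  apply: vG; fin.
    exists k; first by apply: (PK); right; apply: in_pstab Gk sk BCD.
    by split => // y /kB [].
  - have [k Gk [sk kB]] : exists2 k, G k & supp k `<=` B `|` D /\ k @` B `<=` ~` A `&` D.
  apply: vG; fin.
    exists k; first by apply: (PK); left; apply: in_pstab Gk sk BDC.
    by split => // y /kB [].
set k := k2 \o k1.
have Kk : K k by apply: (KM).
have Gk : G k by apply: (GM).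
have kC : forall p, C p -> ~ A (k p).
  by move=> p Cp; apply: k2B; exists (k1 p) => //; apply: k1C; exists p.
have [ki Kki [kK Kk']] := KV _ Kk.
have [ki' Gki' [kK2 Kk2']] := GV _ Gk.
have eki : ki' = ki by apply: inv_uniq kK2 Kk2' kK.
have Gki : G ki by rewrite -eki.
set g' := ki \o g \o k.
have Gg' : G g' by apply: (GM) => //; apply: (GM).
have Kg' : K g'.
  apply: (PK); left; split => // p Cp.
  rewrite /g' /=.
  have -> : g (k p) = k p.
    by apply: contrapT => h; apply: (kC p Cp); apply: sA.
  by rewrite kK.
have -> : g = k \o g' \o ki.
  by apply: funext => x; rewrite /g' /= !Kk'.
by apply: (KM) => //; apply: (KM).
Qed.

Theorem lemma2p8 (G : set (cantor_space -> cantor_space))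
  (B C D : set cantor_space) :
  is_subgroup G -> vigorous G -> gen_small_support G ->
  K_C B -> K_C C -> K_C D ->
  B `&` C = set0 -> B `&` D = set0 -> C `&` D = set0 ->
  B `|` C `|` D = setT ->
  G = generated (pstab G C `|` pstab G D).
Proof.
move=> HG vG sG KB KC KD BC BD CD U.
apply/seteqP; split.
- move=> f Gf; rewrite sG in Gf => K HK PK.
  apply: Gf => // g [Gg [A [KA sA]]].
  exact: (core _ _ _ _ _ _ _ HG vG HK PK KB KC KD BC BD CD U Gg KA sA).
- move=> f Hf; apply: Hf => //.
  by move=> h [[]|[]].
Qed.
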